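(* Let $n$ be a positive integer with $n \equiv 3 \pmod 6$ and \[n \notin \{9, 15, 21, 141, 153, 165, 177, 189, 231, 249, 261, 285, 351, 357\},\] and let $\rho$ be an integer with $1 \le \rho \le n/3$. Then there exists an $(n+\rho,4)$-packing with exactly $\rho n/3 + D(\rho,4)$ blocks in which the largest partial parallel class has size $\rho$.
   Context: For integers $v \ge k \ge 2$, a $(v,k)$-packing is a pair $(X,\mathcal{B})$ where $X$ is a set of $v$ points and $\mathcal{B}$ is a set of $k$-subsets of $X$ (blocks) such that every pair of distinct points lies in at most one block. For integers $m \ge 0$, $D(m,k)$ denotes the maximum number of $k$-subsets of an $m$-set such that every pair of points lies in at most one of them (so $D(m,k)=0$ if $m<k$). A partial parallel class (PPC) is a set of pairwise disjoint blocks; its size is the number of blocks in it. ''The largest PPC has size $\rho$'' means that the packing contains a PPC of size $\rho$ but no PPC of size $\rho+1$. *)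

(* Defs.v *)
From mathcomp Require Import all_boot.
Set Implicit Arguments. Unset Strict Implicit. Unset Printing Implicit Defensive.

Definition is_packing (v k : nat) (B : {set {set 'I_v}}) : Prop :=
  (forall b, b \in B -> #|b| = k) /\
  (forall x y : 'I_v, x != y ->
     #|[set b in B | (x \in b) && (y \in b)]| <= 1).

Definition is_packingb (v k : nat) (B : {set {set 'I_v}}) : bool :=
  [forall b in B, #|b| == k] &&
  [forall x : 'I_v, forall y : 'I_v,
     (x != y) ==> (#|[set b in B | (x \in b) && (y \in b)]| <= 1)].

Definition D (m k : nat) : nat :=
  \max_(B : {set {set 'I_m}} | is_packingb k B) #|B|.

Definition is_PPC (v : nat) (B P : {set {set 'I_v}}) : Prop :=
  P \subset B /\
  (forall b1 b2, b1 \in P -> b2 \in P -> b1 != b2 -> [disjoint b1 & b2]).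

Definition largest_PPC_size (v : nat) (B : {set {set 'I_v}}) (rho : nat) : Prop :=
  (exists P, is_PPC B P /\ #|P| = rho) /\
  ~ (exists P, is_PPC B P /\ #|P| = rho.+1).

(* Main.v *)
Require Import Defs.
From mathcomp Require Import all_boot.
From mathcomp Require Import zify.
Set Implicit Arguments. Unset Strict Implicit. Unset Printing Implicit Defensive.


Lemma mod_cases d a b : 0 < d -> a < 3 * d -> b < 3 * d -> a %% d = b %% d ->
  a = b \/ a = b + d \/ a = b + 2 * d \/ b = a + d \/ b = a + 2 * d.
Proof.
move=> Hd Ha Hb Hab.
have Ea := divn_eq a d; have Eb := divn_eq b d.
have qa : a %/ d < 3 by rewrite ltn_divLR // mulnC.
have qb : b %/ d < 3 by rewrite ltn_divLR // mulnC.
move: Ea Eb qa qb Hab; set qa := a %/ d; set qb := b %/ d; set ra := a %% d; set rb := b %% d.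
move=> Ea Eb qa3 qb3 Hr.
case: qa qa3 Ea => [|[|[|//]]] _ Ea; case: qb qb3 Eb => [|[|[|//]]] _ Eb; lia.
Qed.

Lemma mod_cancel k m a b : coprime k m -> a < m -> b < m ->
  (k * a) %% m = (k * b) %% m -> a = b.
Proof.
move=> Hc; wlog le_ab : a b / a <= b => [W Ha Hb E|Ha Hb /eqP E].
  by case: (leqP a b) => h; [apply: W | symmetry; apply: W => //; apply: ltnW].
move: E; rewrite eq_sym eqn_mod_dvd ?leq_mul2l ?le_ab ?orbT // -mulnBr.
rewrite Gauss_dvdr; last by rewrite coprime_sym.
move=> /dvdn_leq H; case E: (b - a) H => [|x]; first lia.
move=> /(_ isT); lia.
Qed.

Definition queen_ok (m : nat) (r x : nat -> nat) :=
  (forall u, u < m -> r u < m) /\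
  (forall u v, u < m -> v < m -> r u = r v -> u = v) /\
  (forall u v L, u < m - 2 -> v < m - 2 -> L < 3 ->
      (x u + L * r u) %% m = (x v + L * r v) %% m -> u = v).

Lemma queenA m : odd m -> ~~ (3 %| m) -> queen_ok m id id.
Proof.
move=> Ho H3; split=> //; split=> // u v L Hu Hv HL.
have Hm : 0 < m by case: (m) Ho.
have E : forall w, w + L * w = L.+1 * w by move=> w; rewrite mulSn.
rewrite !E; apply: mod_cancel; try lia.
case: L HL {E} => [|[|[|//]]] _; rewrite ?coprime1n ?coprime2n //.
by rewrite prime_coprime.
Qed.

Section QB.
Variable h : nat.
Let m := 6 * h + 3.
Definition tauB u := if u == 5 * h + 2 then 6 * h + 1 else if u == 6 * h + 1 then 5 * h + 2 else u.
Definition offB t := if t < 2 * h + 1 then 0 else if t < 3 * h + 1 then 1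
   else if t < 5 * h + 2 then 2 else 1.
Definition xB u := tauB u + offB (tauB u).

Lemma offB_spec t : (t < 2 * h + 1 -> offB t = 0) /\ (2 * h + 1 <= t < 3 * h + 1 -> offB t = 1)
  /\ (3 * h + 1 <= t < 5 * h + 2 -> offB t = 2) /\ (5 * h + 2 <= t -> offB t = 1).
Proof. rewrite /offB; do ! case: ifP; lia. Qed.

Lemma tauB_spec u : (u = 5 * h + 2 -> tauB u = 6 * h + 1) /\ (u = 6 * h + 1 -> tauB u = 5 * h + 2)
  /\ (u <> 5 * h + 2 -> u <> 6 * h + 1 -> tauB u = u).
Proof. rewrite /tauB; do ! case: eqP; lia. Qed.

End QB.


Lemma offB_cases h t : 
  [\/ t < 2 * h + 1 /\ offB h t = 0, 2 * h + 1 <= t < 3 * h + 1 /\ offB h t = 1,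
      3 * h + 1 <= t < 5 * h + 2 /\ offB h t = 2 | 5 * h + 2 <= t /\ offB h t = 1].
Proof. rewrite /offB; do ! case: ifP; move=> *; [apply: Or41|apply: Or42|apply: Or43|apply: Or44]; lia. Qed.

Lemma queenB_core h t1 t2 L : 0 < h -> t1 <> t2 -> t1 < 6 * h + 2 -> t2 < 6 * h + 2 ->
  t1 <> 5 * h + 2 -> t2 <> 5 * h + 2 -> L < 3 ->
  (t1 + offB h t1 + L * t1) %% (6 * h + 3) = (t2 + offB h t2 + L * t2) %% (6 * h + 3) -> False.
Proof.
move=> Hh N H1 H2 N1 N2 HL.
case: L HL => [|[|[|//]]] _; rewrite ?mul0n ?mul1n ?addn0;
case: (offB_cases h t1) => -[R1 ->]; case: (offB_cases h t2) => -[R2 ->] E;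
(have := fun H0 Ha Hb => mod_cases (d := 6 * h + 3) H0 Ha Hb E); clear E;
move=> /(_ ltac:(lia) ltac:(lia) ltac:(lia));
case=> [E'|[E'|[E'|[E'|E']]]]; lia.
Qed.


Lemma queenB' h : 0 < h -> queen_ok (6 * h + 3) (tauB h) (xB h).
Proof.
move=> Hh; split; [|split].
- move=> u Hu; have := tauB_spec h u; lia.
- move=> u v Hu Hv; have := tauB_spec h u; have := tauB_spec h v; lia.
move=> u v L Hu Hv HL; rewrite /xB => E.
case: (eqVneq u v) => [//|Nuv]; exfalso.
have := tauB_spec h u; have := tauB_spec h v => tv tu.
apply: (@queenB_core h (tauB h u) (tauB h v) L Hh _ _ _ _ _ HL E); clear E; lia.
Qed.

Lemma queen_exists m : odd m -> 9 <= m -> exists r x, queen_ok m r x.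
Proof.
move=> Ho Hm; case: (boolP (3 %| m)) => H3; last by exists id, id; apply: queenA.
move: H3 => /dvdnP [k Ek].
have Hk : odd k by move: Ho; rewrite Ek oddM andbT.
have [h Eh] : exists h, k = 2 * h + 1.
  by exists k./2; rewrite -[k in LHS]odd_double_half Hk addnC -muln2 mulnC.
have -> : m = 6 * h + 3 by lia.
exists (tauB h), (xB h); apply: queenB'; lia.
Qed.


Lemma modeq_addl m a a' b b' : a %% m = a' %% m ->
  ((a + b) %% m = (a' + b') %% m) <-> (b %% m = b' %% m).
Proof.
move=> E; rewrite -modnDml E modnDml; split.
  by move/eqP; rewrite eqn_modDl => /eqP.
by move=> E2; rewrite -modnDmr E2 modnDmr.
Qed.

Lemma lin2 m a a' c c' L1 L2 : odd m -> c < m -> c' < m -> L1 < L2 -> L2 < 3 ->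
  (a + L1 * c) %% m = (a' + L1 * c') %% m ->
  (a + L2 * c) %% m = (a' + L2 * c') %% m -> c = c'.
Proof.
move=> Ho Hc Hc' H12 H2.
case: L1 H12 => [|[|//]]; case: L2 H2 => [|[|[|//]]] //= _ _; rewrite ?mul0n ?mul1n ?addn0.
- by move=> E /(modeq_addl _ _ E) E2; rewrite -(modn_small Hc) -(modn_small Hc') E2.
- move=> E /(modeq_addl _ _ E) E2; apply: (mod_cancel (k := 2) (m := m)) => //.
  by rewrite coprime2n.
- move=> E; rewrite !mul2n -!addnn !addnA => /(modeq_addl _ _ E) E2.
  by rewrite -(modn_small Hc) -(modn_small Hc') E2.
Qed.

Lemma exists_sub (T : finType) (P B : {set T}) N : P \subset B -> #|P| <= N -> N <= #|B| ->
  exists B' : {set T}, [/\ P \subset B', B' \subset B & #|B'| = N].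
Proof.
move=> PB; move Ek: (#|B| - N) => k; elim: k B Ek PB => [|k IH] B Ek PB HP HN.
  by exists B; split=> //; lia.
have : ~~ (B \subset P).
  apply/negP=> /subset_leq_card; lia.
case/subsetPn=> z zB zP.
have E1 : #|B :\ z| - N = k by rewrite (cardsD1 z B) zB in Ek; lia.
have E2 : P \subset B :\ z.
  by apply/subsetP=> y yP; rewrite !inE (subsetP PB _ yP) andbT; apply: contraNneq zP => <-.
have E3 : N <= #|B :\ z| by rewrite (cardsD1 z B) zB in Ek; lia.
have [B' [H1 H2 H3]] := IH (B :\ z) E1 E2 HP E3.
by exists B'; split=> //; apply: (subset_trans H2); apply: subsetDl.
Qed.


Section Construction.
Variables (m rho : nat) (r x f g : nat -> nat).
Hypothesis Hq : queen_ok m r x.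
Hypothesis Hm : 9 <= m.
Hypothesis Hodd : odd m.
Hypothesis Hrho0 : 0 < rho.
Hypothesis Hrhom : rho <= m.
Hypothesis Hf : forall s, s < rho -> f s < rho.
Hypothesis Hg : forall u, u < rho -> g u < rho.
Hypothesis Hfg : forall u, u < rho -> f (g u) = u.
Hypothesis Hgf : forall s, s < rho -> g (f s) = s.

Local Notation v := (3 * m + rho).
Definition o0 : 'I_v := Ordinal (ltn_addl (3 * m) Hrho0).
Definition pt (L y : nat) : 'I_v := insubd o0 (L * m + y %% m).
Definition sp (s : nat) : 'I_v := insubd o0 (3 * m + s).

Lemma m0 : 0 < m. Proof. lia. Qed.

Lemma val_pt L y : L < 3 -> val (pt L y) = L * m + y %% m.
Proof.
move=> HL; rewrite /pt val_insubd; case: ifP => // /negP []. 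
have := ltn_pmod y m0; nia.
Qed.

Lemma val_sp s : s < rho -> val (sp s) = 3 * m + s.
Proof. by move=> Hs; rewrite /sp val_insubd ltn_add2l Hs. Qed.

Lemma pt_inj L1 L2 y1 y2 : L1 < 3 -> L2 < 3 -> pt L1 y1 = pt L2 y2 ->
  L1 = L2 /\ y1 %% m = y2 %% m.
Proof.
move=> H1 H2 /(congr1 val); rewrite !val_pt //.
have := ltn_pmod y1 m0; have := ltn_pmod y2 m0.
move: (y1 %% m) (y2 %% m) => a b Ha Hb.
case: L1 H1 => [|[|[|//]]] _; case: L2 H2 => [|[|[|//]]] _ E; lia.
Qed.

Lemma pt_sp L y s : L < 3 -> s < rho -> pt L y != sp s.
Proof.
move=> HL Hs; apply/eqP => /(congr1 val); rewrite val_pt // val_sp //.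
have := ltn_pmod y m0; nia.
Qed.

Lemma sp_inj s1 s2 : s1 < rho -> s2 < rho -> sp s1 = sp s2 -> s1 = s2.
Proof. by move=> H1 H2 /(congr1 val); rewrite !val_sp //; lia. Qed.

Lemma pt_lt L y : L < 3 -> val (pt L y) < 3 * m.
Proof. move=> HL; rewrite val_pt //; have := ltn_pmod y m0; nia. Qed.

Lemma sp_ge s : s < rho -> 3 * m <= val (sp s).
Proof. by move=> Hs; rewrite val_sp // leq_addr. Qed.

Lemma pt_modE L y : pt L (y %% m) = pt L y.
Proof. by rewrite /pt modn_mod. Qed.


Definition cls s := r (f s).

Lemma cls_lt s : s < rho -> cls s < m.
Proof. move=> Hs; case: Hq => H1 _; apply: H1; have := Hf Hs; lia. Qed.

Lemma cls_inj s1 s2 : s1 < rho -> s2 < rho -> cls s1 = cls s2 -> s1 = s2.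
Proof.
move=> H1 H2 E; case: Hq => _ [Hi _].
have := Hi _ _ (leq_trans (Hf H1) Hrhom) (leq_trans (Hf H2) Hrhom) E.
by move/(congr1 g); rewrite !Hgf.
Qed.

Definition T1 s y : {set 'I_v} := sp s |: [set pt (val L) (y + val L * cls s) | L : 'I_3].

Lemma T1P p s y : reflect (p = sp s \/ exists2 L, L < 3 & p = pt L (y + L * cls s)) (p \in T1 s y).
Proof.
rewrite /T1 !inE; apply: (iffP orP) => [[/eqP->|/imsetP[L _ ->]]|[->|[L HL ->]]].
- by left.
- by right; exists (val L) => //; apply: ltn_ord.
- by left.
- by right; apply/imsetP; exists (Ordinal HL).
Qed.

Lemma T1_level s y L1 L2 y1 y2 : s < rho -> L1 < 3 -> L2 < 3 ->
  pt L1 y1 \in T1 s y -> pt L2 y2 \in T1 s y -> L1 = L2 -> pt L1 y1 = pt L2 y2.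
Proof.
move=> Hs H1 H2 /T1P[E|[K1 HK1 E1]]; first by move: (pt_sp y1 H1 Hs); rewrite E eqxx.
move=> /T1P[E|[K2 HK2 E2]]; first by move: (pt_sp y2 H2 Hs); rewrite E eqxx.
move=> EL; move: (pt_inj H1 HK1 E1) (pt_inj H2 HK2 E2) => [e1 _] [e2 _].
by rewrite E1 E2 -e1 -e2 EL.
Qed.

Lemma T1_pair s1 s2 y1 y2 p q : s1 < rho -> s2 < rho -> p != q ->
  p \in T1 s1 y1 -> q \in T1 s1 y1 -> p \in T1 s2 y2 -> q \in T1 s2 y2 ->
  s1 = s2 /\ y1 %% m = y2 %% m.
Proof.
move=> Hs1 Hs2 Npq.
have key : forall z, z \in T1 s1 y1 -> z \in T1 s2 y2 -> z = sp s1 -> s1 = s2.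
  move=> z _ /T1P[->|[L HL ->]] E; first by apply: sp_inj.
  by move: (pt_sp (y2 + L * cls s2) HL Hs1); rewrite E eqxx.
have lev : forall z, s1 = s2 -> z \in T1 s1 y1 -> z \in T1 s2 y2 -> z != sp s1 ->
    y1 %% m = y2 %% m.
  move=> z Es /T1P[->|[L HL ->]]; first by rewrite eqxx.
  move=> /T1P[E|[L' HL' E]] _.
    by move: (pt_sp (y1 + L * cls s1) HL Hs2); rewrite E eqxx.
  have [EL Ey] := pt_inj HL HL' E; subst L' s2.
  by move/eqP: Ey; rewrite eqn_modDr => /eqP.
case: (eqVneq p (sp s1)) => Ep.
  move=> p1 q1 p2 q2; have Es := key _ p1 p2 Ep; split=> //.
  by apply: (lev q) => //; rewrite -Ep eq_sym.
case: (eqVneq q (sp s1)) => Eq.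
  move=> p1 q1 p2 q2; have Es := key _ q1 q2 Eq; split=> //.
  by apply: (lev p).
move=> /T1P[Ep0|[L1 HL1 Ep1]]; first by rewrite Ep0 eqxx in Ep.
move=> /T1P[Eq0|[L2 HL2 Eq1]]; first by rewrite Eq0 eqxx in Eq.
move=> /T1P[E|[L1' HL1' Ep2]].
  by move: (pt_sp (y1 + L1 * cls s1) HL1 Hs2); rewrite -Ep1 E eqxx.
move=> /T1P[E|[L2' HL2' Eq2]].
  by move: (pt_sp (y1 + L2 * cls s1) HL2 Hs2); rewrite -Eq1 E eqxx.
have [EL1 M1] := pt_inj HL1 HL1' (etrans (esym Ep1) Ep2).
have [EL2 M2] := pt_inj HL2 HL2' (etrans (esym Eq1) Eq2).
subst L1' L2'.
have NL : L1 != L2.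
  by apply: contraNneq Npq => EL; subst L2; rewrite Ep1 Eq1.
have Ec : cls s1 = cls s2.
  case: (ltngtP L1 L2) NL => // [H12|H21] _.
  - exact: (lin2 Hodd (cls_lt Hs1) (cls_lt Hs2) H12 HL2 M1 M2).
  - exact: (lin2 Hodd (cls_lt Hs1) (cls_lt Hs2) H21 HL1 M2 M1).
have Es := cls_inj Hs1 Hs2 Ec; subst s2; split=> //.
by move/eqP: M1; rewrite eqn_modDr => /eqP.
Qed.

Variable B0 : {set {set 'I_rho}}.
Hypothesis HB0 : is_packing 4 B0.

Definition Dblk (b : {set 'I_rho}) : {set 'I_v} := [set sp (val i) | i in b].
Definition Dset := [set Dblk b | b in B0].
Definition hits L : {set 'I_v} := [set pt L (x (val u) + L * r (val u)) | u : 'I_(m - 4)].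
Definition Lev L : {set 'I_v} := [set pt L (val y) | y : 'I_m].
Definition Intra L := Lev L :\: hits L.
Definition Iset := if m.-1 <= rho then [set Intra (val L) | L : 'I_3] else set0.
Definition T1set := [set T1 (val p.1) (val p.2) | p : 'I_rho * 'I_m].
Definition Bset := T1set :|: Dset :|: Iset.

Lemma DblkP p (b : {set 'I_rho}) : reflect (exists2 i : 'I_rho, i \in b & p = sp i) (p \in Dblk b).
Proof. exact: imsetP. Qed.

Lemma IntraP p L : L < 3 -> p \in Intra L -> exists y, p = pt L y.
Proof. by move=> HL; rewrite inE => /andP[_ /imsetP[y _ ->]]; exists (val y). Qed.

Lemma sp_ord_inj : injective (fun i : 'I_rho => sp (val i)).
Proof. by move=> i j E; apply: val_inj; exact: (sp_inj (ltn_ord i) (ltn_ord j) E). Qed.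

Lemma card_T1 s y : s < rho -> #|T1 s y| = 4.
Proof.
move=> Hs; rewrite /T1 cardsU1 card_imset.
  rewrite card_ord; case: imsetP => // -[L _ E].
  by move: (pt_sp (y + val L * cls s) (ltn_ord L) Hs); rewrite E eqxx.
by move=> L1 L2 E; have [E' _] := pt_inj (ltn_ord L1) (ltn_ord L2) E; apply: val_inj.
Qed.

Lemma card_Dblk b : b \in B0 -> #|Dblk b| = 4.
Proof. by move=> Hb; rewrite /Dblk card_imset; [case: HB0 => H _; apply: H | apply: sp_ord_inj]. Qed.

Lemma hits_sub L : L < 3 -> hits L \subset Lev L.
Proof.
move=> HL; apply/subsetP=> p /imsetP[u _ ->]; apply/imsetP.
by exists (Ordinal (ltn_pmod (x u + L * r u) m0)) => //=; rewrite pt_modE.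
Qed.

Lemma card_Lev L : L < 3 -> #|Lev L| = m.
Proof.
move=> HL; rewrite card_imset ?card_ord // => y1 y2 E0; have [_ E] := pt_inj HL HL E0.
by move: E; rewrite !modn_small ?ltn_ord // => E; apply: val_inj.
Qed.

Lemma card_hits L : L < 3 -> #|hits L| = m - 4.
Proof.
move=> HL; rewrite card_imset ?card_ord // => u1 u2 E0; have [_ E] := pt_inj HL HL E0.
case: Hq => _ [_ Hi]; apply: val_inj; apply: (Hi _ _ L) => //.
- by apply: (leq_trans (ltn_ord u1)); lia.
- by apply: (leq_trans (ltn_ord u2)); lia.
Qed.

Lemma card_Intra L : L < 3 -> #|Intra L| = 4.
Proof.
move=> HL; rewrite /Intra cardsD (setIidPr (hits_sub HL)) card_Lev // card_hits //; lia.
Qed.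

Lemma T1_D z s y (b : {set 'I_rho}) : s < rho -> z \in T1 s y -> z \in Dblk b -> z = sp s.
Proof.
move=> Hs /T1P[//|[L HL ->]] /DblkP[i _ E].
by move: (pt_sp (y + L * cls s) HL (ltn_ord i)); rewrite E eqxx.
Qed.

Lemma T1_Intra z s y L : s < rho -> L < 3 -> z \in T1 s y -> z \in Intra L ->
  z = pt L (y + L * cls s).
Proof.
move=> Hs HL Hz /(IntraP HL) [y' Ez]; move: Hz; rewrite Ez.
move=> /T1P[E|[K HK E]]; first by move: (pt_sp y' HL Hs); rewrite E eqxx.
by have [EK _] := pt_inj HL HK E; rewrite E EK.
Qed.

Lemma D_Intra z (b : {set 'I_rho}) L : L < 3 -> z \in Dblk b -> z \in Intra L -> False.
Proof.
move=> HL /DblkP[i _ ->] /(IntraP HL) [y E].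
by move: (pt_sp y HL (ltn_ord i)); rewrite E eqxx.
Qed.

Lemma Intra_Intra z L1 L2 : L1 < 3 -> L2 < 3 -> z \in Intra L1 -> z \in Intra L2 -> L1 = L2.
Proof.
move=> H1 H2 /(IntraP H1) [y1 ->] /(IntraP H2) [y2 E].
by have [] := pt_inj H1 H2 E.
Qed.

Inductive bkind (b : {set 'I_v}) : Prop :=
 | KT1 s y of s < rho & y < m & b = T1 s y
 | KD b' of b' \in B0 & b = Dblk b'
 | KI L of L < 3 & m.-1 <= rho & b = Intra L.

Lemma BsetP b : b \in Bset -> bkind b.
Proof.
rewrite !inE => /orP[/orP[|]|].
- by move=> /imsetP[[s y] _ ->]; apply: (KT1 (ltn_ord s) (ltn_ord y)).
- by move=> /imsetP[b' Hb' ->]; apply: (KD Hb').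
- rewrite /Iset; case: ifP; last by rewrite inE.
  by move=> Hr /imsetP[L _ ->]; apply: (KI (ltn_ord L) Hr).
Qed.

Lemma pair_unique b1 b2 p q : b1 \in Bset -> b2 \in Bset -> p != q ->
  p \in b1 -> q \in b1 -> p \in b2 -> q \in b2 -> b1 = b2.
Proof.
move=> /BsetP[s1 y1 Hs1 Hy1 ->|b1' Hb1 ->|L1 HL1 _ ->] /BsetP[s2 y2 Hs2 Hy2 ->|b2' Hb2 ->|L2 HL2 _ ->] Npq.
- move=> p1 q1 p2 q2; have [Es Ey] := T1_pair Hs1 Hs2 Npq p1 q1 p2 q2.
  by move: Ey; rewrite !modn_small // => ->; rewrite Es.
- move=> p1 q1 p2 q2; have := T1_D Hs1 p1 p2; have := T1_D Hs1 q1 q2.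
  by move=> E1 E2; move: Npq; rewrite E1 E2 eqxx.
- move=> p1 q1 p2 q2; have := T1_Intra Hs1 HL2 p1 p2; have := T1_Intra Hs1 HL2 q1 q2.
  by move=> E1 E2; move: Npq; rewrite E1 E2 eqxx.
- move=> p1 q1 p2 q2; have := T1_D Hs2 p2 p1; have := T1_D Hs2 q2 q1.
  by move=> E1 E2; move: Npq; rewrite E1 E2 eqxx.
- move=> /DblkP[i Hi1 Ep] /DblkP[j Hj1 Eq] /DblkP[i' Hi2 Ep'] /DblkP[j' Hj2 Eq'].
  have ii : i = i' by apply: sp_ord_inj; rewrite -Ep -Ep'.
  have jj : j = j' by apply: sp_ord_inj; rewrite -Eq -Eq'.
  subst i' j'.
  have Nij : i != j by apply: contraNneq Npq => E; rewrite Ep Eq E.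
  case: HB0 => _ /(_ i j Nij) /card_le1_eqP H.
  by rewrite (H b1' b2') // inE ?Hb1 ?Hb2 ?Hi1 ?Hj1 ?Hi2 ?Hj2.
- by move=> p1 _ p2 _; case: (D_Intra HL2 p1 p2).
- move=> p1 q1 p2 q2; have := T1_Intra Hs2 HL1 p2 p1; have := T1_Intra Hs2 HL1 q2 q1.
  by move=> E1 E2; move: Npq; rewrite E1 E2 eqxx.
- by move=> p1 _ p2 _; case: (D_Intra HL1 p2 p1).
- by move=> p1 _ p2 _; rewrite (Intra_Intra HL1 HL2 p1 p2).
Qed.

Lemma Bset_packing : is_packing 4 Bset.
Proof.
split.
  by move=> b /BsetP[s y Hs _ ->|b' Hb ->|L HL _ ->]; rewrite ?card_T1 ?card_Dblk ?card_Intra.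
move=> p q Npq; apply/card_le1_eqP => b1 b2.
rewrite in_set => /andP[H1 /andP[p1 q1]]; rewrite in_set => /andP[H2 /andP[p2 q2]].
by rewrite (pair_unique H1 H2 Npq).
Qed.

Lemma pt0_T1 s y : pt 0 y \in T1 s y.
Proof. by apply/T1P; right; exists 0 => //; rewrite mul0n addn0. Qed.

Lemma card_T1set : #|T1set| = rho * m.
Proof.
rewrite card_imset ?card_prod ?card_ord // => -[s1 y1] [s2 y2] /= E.
have Es : s1 = s2.
  have : sp s1 \in T1 s2 y2 by rewrite -E; apply/T1P; left.
  case/T1P=> [/sp_inj E'|[L HL E']]; first by apply: val_inj; apply: E'.
  by move: (pt_sp (y2 + L * cls s2) HL (ltn_ord s1)); rewrite E' eqxx.
subst s2; congr (_, _).
have : pt 0 y1 \in T1 s1 y2 by rewrite -E pt0_T1.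
case/T1P=> [E'|[L HL E']]; first by move: (pt_sp y1 (isT : 0 < 3) (ltn_ord s1)); rewrite E' eqxx.
have [EL Ey] := pt_inj (isT : 0 < 3) HL E'; subst L.
by move: Ey; rewrite mul0n addn0 !modn_small // => Ey; apply: val_inj.
Qed.

Lemma card_Dset : #|Dset| = #|B0|.
Proof. by rewrite card_imset //; apply: imset_inj; apply: sp_ord_inj. Qed.

Lemma card_Bset : rho * m + #|B0| <= #|Bset|.
Proof.
rewrite -card_T1set -card_Dset.
have -> : #|T1set| + #|Dset| = #|T1set :|: Dset|.
  rewrite cardsU; suff -> : T1set :&: Dset = set0 by rewrite cards0 subn0.
  apply/eqP; rewrite -subset0; apply/subsetP => b; rewrite !inE.
  case/andP=> /imsetP[[s y] _ ->] /imsetP[b' _ E].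
  have : pt 0 (val y) \in Dblk b' by rewrite -E pt0_T1.
  case/DblkP=> i _ E'.
  by move: (pt_sp (val y) (isT : 0 < 3) (ltn_ord i)); rewrite E' eqxx.
by apply: subset_leq_card; apply: subsetUl.
Qed.

Definition Sset : {set 'I_v} := [set sp (val i) | i : 'I_rho].

Lemma card_Sset : #|Sset| = rho.
Proof. by rewrite card_imset ?card_ord //; apply: sp_ord_inj. Qed.

Lemma PPC_upper_small (Q : {set {set 'I_v}}) : rho <= m - 2 -> is_PPC Bset Q -> #|Q| <= rho.
Proof.
move=> Hr [QB Hdisj].
have meet : forall b, b \in Q -> exists z, z \in b :&: Sset.
  move=> b /(subsetP QB) /BsetP[s y Hs _ ->|b' Hb ->|L HL Hr' ->].
  - by exists (sp s); rewrite !inE eqxx /=; apply/imsetP; exists (Ordinal Hs).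
  - have : 0 < #|b'| by case: HB0 => H _; rewrite H.
    case/card_gt0P=> i Hi; exists (sp i); rewrite !inE; apply/andP; split.
      by apply/imsetP; exists i.
    by apply/imsetP; exists i.
  - by exfalso; lia.
pose phi (b : {set 'I_v}) := odflt o0 [pick z in b :&: Sset].
have phiP : forall b, b \in Q -> phi b \in b :&: Sset.
  move=> b /meet [z Hz]; rewrite /phi; case: pickP => [z' //|/(_ z)]; by rewrite Hz.
apply: (@leq_trans #|Sset|); last by rewrite card_Sset.
rewrite -(card_in_imset (f := phi)).
  apply: subset_leq_card; apply/subsetP => z /imsetP[b Hb ->].
  by have := phiP b Hb; rewrite inE => /andP[].
move=> b1 b2 H1 H2 E; apply/eqP; apply/negPn/negP => N.
have D := Hdisj b1 b2 H1 H2 N.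
have := phiP b1 H1; have := phiP b2 H2; rewrite !inE E => /andP[h2 _] /andP[h1 _].
by rewrite (disjointFr D h1) in h2.
Qed.

Lemma PPC_upper_big (Q : {set {set 'I_v}}) : m.-1 <= rho -> is_PPC Bset Q -> #|Q| <= rho.
Proof.
move=> Hr [QB Hdisj].
have triv : trivIset Q by apply/trivIsetP => A B HA HB N; exact: Hdisj.
have E : \sum_(B in Q) #|B| = #|cover Q| by move: triv; rewrite /trivIset => /eqP.
have S4 : \sum_(B in Q) #|B| = #|Q| * 4.
  rewrite -sum_nat_const; apply: eq_bigr => B HB.
  by case: Bset_packing => H _; apply: H; apply: (subsetP QB).
have C : #|cover Q| <= v by rewrite -[X in _ <= X]card_ord; apply: max_card.
lia.
Qed.

Lemma PPC_upper (Q : {set {set 'I_v}}) : is_PPC Bset Q -> #|Q| <= rho.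
Proof.
case: (leqP rho (m - 2)) => Hr.
  exact: PPC_upper_small.
apply: PPC_upper_big; lia.
Qed.

Hypothesis Hbeta : rho = m -> [set i : 'I_rho | m - 4 <= f i] \in B0.

Definition QB u := T1 (g u) (x u).
Definition Dbeta := Dblk [set i : 'I_rho | m - 4 <= f i].
Definition blk u := if rho <= m - 2 then QB u else if u < m - 4 then QB u
  else if u < m - 1 then Intra (u - (m - 4)) else Dbeta.

Lemma T1_mod s y : T1 s (y %% m) = T1 s y.
Proof. by rewrite /T1; congr (_ |: _); apply: eq_imset => L; rewrite /pt modnDml. Qed.

Lemma QB_in u : u < rho -> QB u \in Bset.
Proof.
move=> Hu; rewrite /Bset !inE; apply/orP; left; apply/orP; left.
apply/imsetP; exists (Ordinal (Hg Hu), Ordinal (ltn_pmod (x u) m0)) => //=.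
by rewrite T1_mod.
Qed.

Lemma QBP z u : u < rho -> z \in QB u ->
  z = sp (g u) \/ exists2 L, L < 3 & z = pt L (x u + L * r u).
Proof. by move=> Hu /T1P; rewrite /cls Hfg. Qed.

Lemma disj_of (A B : {set 'I_v}) : (forall z, z \in A -> z \in B -> False) -> [disjoint A & B].
Proof.
move=> H; rewrite disjoint_subset; apply/subsetP => z zA; rewrite inE; apply/negP => zB.
exact: H zA zB.
Qed.

Lemma disj_sym' (A B : {set 'I_v}) : [disjoint A & B] -> [disjoint B & A].
Proof. by move=> D; apply: disj_of => z zB zA; rewrite (disjointFr D zA) in zB. Qed.

Lemma QB_QB u u' : u < rho -> u' < rho -> u < m - 2 -> u' < m - 2 -> u != u' ->
  [disjoint QB u & QB u'].
Proof.
move=> Hu Hu' Hu2 Hu2' N; apply: disj_of => z /(QBP Hu)[->|[L HL ->]] /(QBP Hu')[E|[L' HL' E]].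
- move: N; rewrite -(Hfg Hu) -(Hfg Hu') (sp_inj (Hg Hu) (Hg Hu') E) eqxx //.
- by move: (pt_sp (x u' + L' * r u') HL' (Hg Hu)); rewrite E eqxx.
- by move: (pt_sp (x u + L * r u) HL (Hg Hu')); rewrite E eqxx.
- have [EL EM] := pt_inj HL HL' E; subst L'.
  case: Hq => _ [_ Hi]; move: N; rewrite (Hi _ _ L Hu2 Hu2' HL EM) eqxx //.
Qed.

Lemma QB_Intra u L : u < rho -> u < m - 4 -> L < 3 -> [disjoint QB u & Intra L].
Proof.
move=> Hu Hu4 HL; apply: disj_of => z z1 z2.
have E := T1_Intra (Hg Hu) HL z1 z2; move: z2; rewrite E /cls Hfg // inE.
case/andP => /negP H _; apply: H; apply/imsetP; exists (Ordinal Hu4) => //.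
Qed.

Lemma QB_Dbeta u : u < rho -> u < m - 4 -> [disjoint QB u & Dbeta].
Proof.
move=> Hu Hu4; apply: disj_of => z z1 z2.
have E := T1_D (Hg Hu) z1 z2; move: z2; rewrite E => /DblkP[i]; rewrite inE => Hi E'.
have := sp_inj (Hg Hu) (ltn_ord i) E' => /(congr1 f); rewrite Hfg // => Ef.
lia.
Qed.

Lemma Intra_Intra_disj L L' : L < 3 -> L' < 3 -> L != L' -> [disjoint Intra L & Intra L'].
Proof.
move=> HL HL' N; apply: disj_of => z z1 z2.
by move: N; rewrite (Intra_Intra HL HL' z1 z2) eqxx.
Qed.

Lemma Intra_Dbeta L : L < 3 -> [disjoint Intra L & Dbeta].
Proof. by move=> HL; apply: disj_of => z z1 z2; apply: (D_Intra HL z2 z1). Qed.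

Lemma blk_in u : u < rho -> blk u \in Bset.
Proof.
move=> Hu; rewrite /blk; case: ifP => H1; first exact: QB_in.
case: ifP => H2; first exact: QB_in.
case: ifP => H3.
  rewrite /Bset !inE; apply/orP; right; rewrite /Iset ifT; last by lia.
  have HL : u - (m - 4) < 3 by lia.
  by apply/imsetP; exists (Ordinal HL).
rewrite /Bset !inE; apply/orP; left; apply/orP; right.
by apply/imsetP; exists [set i : 'I_rho | m - 4 <= f i] => //; apply: Hbeta; lia.
Qed.

Lemma blk_cases u : ~~ (rho <= m - 2) ->
  [\/ u < m - 4 /\ blk u = QB u, m - 4 <= u < m - 1 /\ blk u = Intra (u - (m - 4))
    | m - 1 <= u /\ blk u = Dbeta].
Proof.
move=> /negbTE H1; rewrite /blk H1.
case: (ltnP u (m - 4)) => H2; first by apply: Or31.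
case: (ltnP u (m - 1)) => H3; first by apply: Or32; split=> //; apply/andP.
by apply: Or33.
Qed.

Lemma blk_disj u u' : u < rho -> u' < rho -> u != u' -> [disjoint blk u & blk u'].
Proof.
move=> Hu Hu' N; case: (boolP (rho <= m - 2)) => H1.
  by rewrite /blk H1; apply: QB_QB => //; lia.
case: (blk_cases u H1) => -[C ->]; case: (blk_cases u' H1) => -[C' ->].
- by apply: QB_QB => //; lia.
- by apply: QB_Intra => //; lia.
- exact: QB_Dbeta.
- by apply: disj_sym'; apply: QB_Intra => //; lia.
- by apply: Intra_Intra_disj; lia.
- by apply: Intra_Dbeta; lia.
- by apply: disj_sym'; apply: QB_Dbeta.
- by apply: disj_sym'; apply: Intra_Dbeta; lia.
- exfalso; lia.
Qed.

Definition Pset := [set blk (val u) | u : 'I_rho].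

Lemma Pset_PPC : is_PPC Bset Pset.
Proof.
split.
  by apply/subsetP => b /imsetP[u _ ->]; apply: blk_in (ltn_ord u).
move=> b1 b2 /imsetP[u1 _ ->] /imsetP[u2 _ ->] N; apply: (blk_disj (ltn_ord u1) (ltn_ord u2)).
by apply/eqP => E; have E' : u1 = u2 := val_inj E; move: N; rewrite E' eqxx.
Qed.

Lemma card_Pset : #|Pset| = rho.
Proof.
rewrite card_imset ?card_ord // => u1 u2 E; apply/eqP; apply/negPn/negP => N.
have D := blk_disj (ltn_ord u1) (ltn_ord u2) (N : val u1 != val u2).
have : 0 < #|blk u1| by case: Bset_packing => H _; rewrite H // blk_in.
case/card_gt0P=> z Hz.
by move: (disjointFr D Hz); rewrite -E Hz.
Qed.

Lemma construct : exists B : {set {set 'I_v}},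
  is_packing 4 B /\ #|B| = rho * m + #|B0| /\ largest_PPC_size B rho.
Proof.
have [PB PD] := Pset_PPC.
have h1 : #|Pset| <= rho * m + #|B0| by rewrite card_Pset; nia.
have [B' [H1 H2 H3]] := exists_sub PB h1 card_Bset.
exists B'; split; [|split=> //].
  case: Bset_packing => Hs Hp; split.
    by move=> b Hb; apply: Hs; apply: (subsetP H2).
  move=> p q N; apply: leq_trans (Hp p q N); apply: subset_leq_card.
  apply/subsetP => b; rewrite in_set => /andP[Hb Hpq]; by rewrite in_set (subsetP H2 _ Hb) Hpq.
split.
  by exists Pset; split; [split | apply: card_Pset].
move=> [Q [[QB QD] HQ]].
have : #|Q| <= rho by apply: PPC_upper; split=> //; apply: (subset_trans QB H2).
by rewrite HQ ltnn.
Qed.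

End Construction.


Lemma packP v k (B : {set {set 'I_v}}) : reflect (is_packing k B) (is_packingb k B).
Proof.
apply: (iffP andP) => [[/forall_inP H1 /forallP H2]|[H1 H2]]; split.
- by move=> b /H1 /eqP.
- by move=> x y N; move: (H2 x) => /forallP /(_ y) /implyP; apply.
- by apply/forall_inP => b /H1 ->.
- by apply/forallP => x; apply/forallP => y; apply/implyP => N; apply: H2.
Qed.

Lemma D_arg v k : exists2 B0 : {set {set 'I_v}}, is_packing k B0 & D v k = #|B0|.
Proof.
have H : 0 < #|[pred B : {set {set 'I_v}} | is_packingb k B]|.
  apply/card_gt0P; exists set0; rewrite inE; apply/andP; split.
    by apply/forall_inP => b; rewrite inE.
  by apply/forallP => x; apply/forallP => y; apply/implyP => _; rewrite (_ : [set _ in _ | _] = set0) ?cards0 //; apply/setP => b; rewrite !inE.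
have [B0 HB0 E] := eq_bigmax_cond (fun B : {set {set 'I_v}} => #|B|) H.
exists B0; first by apply/packP; rewrite inE in HB0.
by rewrite /D -E; apply: eq_bigl => B; rewrite inE.
Qed.

Lemma D_ge1 m : 4 <= m -> 1 <= D m 4.
Proof.
move=> Hm.
pose b := [set widen_ord Hm i | i : 'I_4].
have Hb : #|b| = 4 by rewrite card_imset ?card_ord // => i j /(congr1 val) /= E; apply: val_inj.
have P : is_packingb 4 [set b].
  apply/packP; split; first by move=> b'; rewrite inE => /eqP ->.
  move=> x y _; rewrite -(cards1 b); apply: subset_leq_card.
  by apply/subsetP => b'; rewrite !inE => /andP[].
by apply: (leq_trans _ (leq_bigmax_cond _ P)); rewrite cards1.
Qed.

Lemma D_1 : D 1 4 = 0.
Proof.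
apply/eqP; rewrite -leqn0; apply/bigmax_leqP => B /packP [H1 _].
rewrite leqn0 cards_eq0; apply/eqP/setP => b; rewrite inE; apply/negP => Hb.
by move: (H1 b Hb) (max_card b); rewrite card_ord => ->.
Qed.

Lemma relabel (m : nat) (beta : {set 'I_m}) : #|beta| = 4 ->
  exists f g : nat -> nat,
   [/\ forall s, s < m -> f s < m, forall u, u < m -> g u < m,
       forall u, u < m -> f (g u) = u, forall s, s < m -> g (f s) = s &
       [set i : 'I_m | m - 4 <= f i] = beta].
Proof.
move=> Hb.
pose L := enum (~: beta) ++ enum beta.
pose L' := map val L.
have uL : uniq L.
  rewrite cat_uniq !enum_uniq /= andbT; apply/hasPn => i; rewrite mem_enum => Hi.
  by rewrite /= mem_enum inE Hi.
have uL' : uniq L' by rewrite map_inj_uniq //; apply: val_inj.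
have sL : size L = m.
  by rewrite size_cat -!cardE -[X in _ = X](card_ord m) -(cardsC beta) addnC.
have sL' : size L' = m by rewrite size_map.
have memL : forall i : 'I_m, i \in L by move=> i; rewrite mem_cat !mem_enum inE; case: (i \in beta).
have memL' : forall s, s < m -> s \in L'.
  by move=> s Hs; apply/mapP; exists (Ordinal Hs) => //.
exists (fun s => index s L'), (fun u => nth 0 L' u); split.
- by move=> s Hs; rewrite -sL' index_mem; apply: memL'.
- move=> u Hu; have : nth 0 L' u \in L' by apply: mem_nth; rewrite sL'.
  by case/mapP => i _ ->; apply: ltn_ord.
- by move=> u Hu; rewrite index_uniq // sL'.
- by move=> s Hs; rewrite nth_index //; apply: memL'.
apply/setP => i; rewrite inE.
have -> : index (val i) L' = index i L by rewrite index_map //; apply: val_inj.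
rewrite index_cat mem_enum inE.
have sC : #|~: beta| = m - 4.
  by move: (cardsC beta); rewrite card_ord Hb; lia.
case: (boolP (i \in beta)) => Hi /=.
  by rewrite -cardE sC leq_addr.
by apply/negbTE; rewrite -ltnNge -sC cardE index_mem mem_enum inE Hi.
Qed.


Lemma case_m1 : exists B : {set {set 'I_(3 * 1 + 1)}},
    is_packing 4 B /\ #|B| = 1 * (3 * 1) %/ 3 + D 1 4 /\ largest_PPC_size B 1.
Proof.
exists [set setT]; split; [split|split].
- by move=> b; rewrite inE => /eqP ->; rewrite cardsT card_ord.
- move=> p q _; apply: (@leq_trans #|[set (setT : {set 'I_(3 * 1 + 1)})]|); last by rewrite cards1.
  by apply: subset_leq_card; apply/subsetP => b; rewrite !inE => /andP[].
- by rewrite cards1 D_1.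
split.
  exists [set setT]; split; last by rewrite cards1.
  by split=> // b1 b2; rewrite !inE => /eqP -> /eqP ->; rewrite eqxx.
move=> [Q [[QB _] HQ]].
by move: (subset_leq_card QB); rewrite HQ cards1.
Qed.

Theorem theorem2p3 (n rho : nat) :
  0 < n -> n %% 6 = 3 ->
  n \notin [:: 9; 15; 21; 141; 153; 165; 177; 189; 231; 249; 261; 285; 351; 357] ->
  1 <= rho -> 3 * rho <= n ->
  exists B : {set {set 'I_(n + rho)}},
    is_packing 4 B /\
    #|B| = rho * n %/ 3 + D rho 4 /\
    largest_PPC_size B rho.
Proof.
move=> Hn0 Hn6 Hex Hr1 Hr3.
have [q Eq] : exists q, n = 6 * q + 3.
  by exists (n %/ 6); rewrite {1}(divn_eq n 6) Hn6 mulnC.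
have [m [Em Emq]] : exists m, n = 3 * m /\ m = 2 * q + 1 by exists (2 * q + 1); lia.
clear Eq; subst n.
have Hodd : odd m by rewrite Emq oddD oddM.
move: Hex; rewrite !inE => /norP[h9 /norP[h15 /norP[h21 _]]].
have [Hm1|H9] : m = 1 \/ 9 <= m.
  by move: h9 h15 h21; rewrite Emq; lia.
  clear Emq; subst m; have -> : rho = 1 by lia.
  exact: case_m1.
rewrite mulnCA mulKn //.
have [B0 HB0 ED] := D_arg rho 4.
have [r [x Hq]] := queen_exists Hodd H9.
case: (ltnP rho m) => Hrm.
  have [B [HB1 [HB2 HB3]]] := @construct m rho r x id id Hq H9 Hodd Hr1 (ltnW Hrm)
     (fun s h => h) (fun s h => h) (fun s h => erefl) (fun s h => erefl) B0 HB0
     (fun E => ltac:(exfalso; lia)).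
  by exists B; split=> //; split=> //; rewrite HB2 ED.
have Erm : rho = m by lia.
subst rho.
have : 0 < #|B0| by rewrite -ED; apply: D_ge1; lia.
case/card_gt0P => beta Hbeta.
have Hb4 : #|beta| = 4 by case: HB0 => H _; apply: H.
have [f [g [Hf Hg Hfg Hgf Hset]]] := relabel Hb4.
have [B [HB1 [HB2 HB3]]] := @construct m m r x f g Hq H9 Hodd Hr1 (leqnn m)
     Hf Hg Hfg Hgf B0 HB0 (fun _ => ltac:(rewrite Hset; exact: Hbeta)).
by exists B; split=> //; split=> //; rewrite HB2 ED.
Qed.
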